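(* Let $G$ be a group, let $\pi:(0,1]\to(0,1]$ be non-decreasing with $\pi(\gamma)\to0$ as $\gamma\to0$, and let $M=(\mu_n)_{n=1}^\infty$ be a sequence of probability measures on $G$ that detects index uniformly at rate $\pi$. Let $\alpha\in(0,1]$ and suppose $\textup{dc}_M(G)\ge\alpha$. Let $\gamma\in(0,1)$ be such that $\pi(\gamma)<\alpha$, and let $X=\{x\in G:[G:C_G(x)]\le\frac{1}{\gamma}\}$. Then $\limsup_{n\to\infty}\mu_n(X)\ge\alpha-\pi(\gamma)$.
   Context: $M$ detects index uniformly at rate $\pi$ if for every $\varepsilon>0$ there exists $N$ such that for every $m\in\mathbb{N}$ and every subgroup $H$ with $[G:H]\ge m$ (possibly infinite) we have $\mu_n(H)\le\pi(\frac1m)+\varepsilon$ for all $n\ge N$. $\textup{dc}_M(G)=\limsup_n(\mu_n\times\mu_n)(\{(x,y):xy=yx\})$. $C_G(x)$ is the centraliser of $x$. *)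

(* Defs.v *)
From HB Require Import structures.
From mathcomp Require Import all_boot all_order all_algebra.
From mathcomp Require Import all_classical all_reals all_analysis.
Set Implicit Arguments.
Unset Strict Implicit.
Unset Printing Implicit Defensive.
Import Order.TTheory GRing.Theory Num.Theory.
Local Open Scope classical_set_scope.
Local Open Scope ring_scope.

Definition is_subgroup (G : groupType) (H : set G) : Prop :=
  [/\ H 1%g, (forall x y, H x -> H y -> H (x * y)%g) & (forall x, H x -> H (x^-1)%g)].

(* [G : H] >= m  (index possibly infinite): there are m pairwise distinct
   left cosets g_i H. *)
Definition index_ge (G : groupType) (H : set G) (m : nat) : Prop :=
  exists g : 'I_m -> G, forall i j, i != j -> ~ H ((g i)^-1 * g j)%g.

(* [G : H] <= r  (r real): the index is finite and at most r, i.e. every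
   family of pairwise distinct cosets has at most r members. *)
Definition index_le (R : realType) (G : groupType) (H : set G) (r : R) : Prop :=
  forall m, index_ge H m -> (m%:R <= r).

Definition centraliser (G : groupType) (x : G) : set G :=
  [set y | (x * y)%g = (y * x)%g].

(* A probability measure on G (on the power set), given by its mass function. *)
Definition is_prob_mass (R : realType) (G : groupType) (p : G -> R) : Prop :=
  (forall x, 0 <= p x) /\ (\esum_(x in [set: G]) (p x)%:E = 1%E).

Definition pmeas (R : realType) (G : groupType) (p : G -> R) (A : set G) : \bar R :=
  \esum_(x in A) (p x)%:E.

Definition pmeas2 (R : realType) (G : groupType) (p : G -> R) (S : set (G * G)) : \bar R :=
  \esum_(z in S) (p z.1 * p z.2)%:E.

Definition detects_index_uniformly (R : realType) (G : groupType)
    (mu : nat -> G -> R) (pi : R -> R) : Prop :=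
  forall eps : R, 0 < eps -> exists N : nat,
    forall (m : nat) (H : set G), (0 < m)%N -> is_subgroup H -> index_ge H m ->
      forall n, (N <= n)%N -> (pmeas (mu n) H <= (pi (m%:R^-1) + eps)%:E)%E.

Definition dcM (R : realType) (G : groupType) (mu : nat -> G -> R) : \bar R :=
  limn_esup (fun n => pmeas2 (mu n) [set z | (z.1 * z.2)%g = (z.2 * z.1)%g]).

(* Main.v *)
Require Import Defs.
From HB Require Import structures.
From mathcomp Require Import all_boot all_order all_algebra.
From mathcomp Require Import all_classical all_reals all_analysis.
Import Order.TTheory GRing.Theory Num.Theory.
Local Open Scope classical_set_scope.
Local Open Scope ring_scope.

Lemma centraliser_sub (G : groupType) (x : G) : is_subgroup (centraliser x).
Proof.
split; rewrite /centraliser /=.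
- exact: commute1.
- by move=> y z; apply: commuteM.
- by move=> y; apply: commuteV.
Qed.

Section S.
Context {R : realType}.
Local Open Scope ereal_scope.

Lemma esumZ_le (T : choiceType) (I : set T) (k : R) (a : T -> R) :
  (0 <= k)%R -> (forall x, 0 <= a x)%R ->
  \esum_(i in I) (k * a i)%:E <= k%:E * \esum_(i in I) (a i)%:E.
Proof.
move=> k0 a0; apply: ge_ereal_sup => _ [X [finX XI]] <-.
under eq_fsbigr do rewrite EFinM.
rewrite -ge0_mule_fsumr; last by move=> i; rewrite lee_fin.
apply: lee_wpmul2l; first by rewrite lee_fin.
by apply: ereal_sup_ubound; exists X.
Qed.

Lemma esum_le_T (T : choiceType) (I : set T) (a : T -> \bar R) :
  (forall x, 0 <= a x) -> \esum_(i in I) a i <= \esum_(i in [set: T]) a i.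
Proof.
move=> a0; rewrite esum_mkcond; apply: le_esum => i _.
by case: ifP.
Qed.

Lemma limn_esup_leD (a b : (\bar R)^nat) (c : R) (N : nat) :
  (forall n, (N <= n)%N -> a n <= b n + c%:E) ->
  limn_esup a <= limn_esup b + c%:E.
Proof.
move=> ab; rewrite !limn_esup_lim.
have -> : limn (esups b) + c%:E = limn (fun n => esups b n + c%:E).
  rewrite limeD //; [by rewrite lim_cst|exact: is_cvg_esups|exact: is_cvg_cst|].
  by rewrite lim_cst // fin_num_adde_defl.
apply: lee_lim; [exact: is_cvg_esups| |].
  apply: is_cvgeD; [|exact: is_cvg_esups|exact: is_cvg_cst].
  by rewrite lim_cst // fin_num_adde_defl.
near=> n; apply: ge_ereal_sup => _ [k /= nk <-].
apply: le_trans (ab k _) _.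
  by apply: leq_trans nk; near: n; exists N.
by rewrite leeD2r //; apply: ereal_sup_ubound; exists k.
Unshelve. all: by end_near. Qed.

Lemma per_n (G : groupType) (p : G -> R) (X : set G) (c : R) :
  is_prob_mass p -> (0 <= c)%R ->
  (forall x, ~ X x -> pmeas p (centraliser x) <= c%:E) ->
  pmeas2 p [set z | (z.1 * z.2)%g = (z.2 * z.1)%g] <= pmeas p X + c%:E.
Proof.
case=> p0 p1 c0 hC.
have -> : [set z : G * G | (z.1 * z.2)%g = (z.2 * z.1)%g] =
   [set: G] `*`` (fun x => centraliser x).
  apply/seteqP; split=> -[x y] /=; rewrite /setXR /centraliser /=.
  by move=> h; split.
  by case.
rewrite /pmeas2 -(@esum_esum R G G [set: G] (fun x => centraliser x) (fun x y => (p x * p y)%:E)); last by move=> *; rewrite lee_fin mulr_ge0.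
rewrite /pmeas.
apply: (@le_trans _ _ (\esum_(x in [set: G]) ((if x \in X then (p x)%:E else 0) + (c * p x)%:E))).
  apply: le_esum => x _.
  have h := @esumZ_le G (centraliser x) (p x) p (p0 x) p0.
  apply: (le_trans h).
  case: ifPn => [xX|xX].
  - rewrite -[X in X <= _]adde0 leeD //; last by rewrite lee_fin mulr_ge0.
    rewrite -[leRHS]mule1 lee_wpmul2l //; first by rewrite lee_fin.
    by rewrite -p1 esum_le_T // => y; rewrite lee_fin.
  - rewrite add0e EFinM [c%:E * _]muleC; apply: lee_wpmul2l; first by rewrite lee_fin.
    apply: hC => Xx; move/negP: xX; apply; rewrite in_setE.
    exact: Xx.
rewrite esumD; last 2 first.
- by move=> x _; case: ifP => //; rewrite lee_fin.
- by move=> x _; rewrite lee_fin mulr_ge0.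
rewrite -esum_mkcond leeD2l //.
by apply: le_trans (@esumZ_le G [set: G] c p c0 p0) _; rewrite p1 mule1.
Qed.
End S.

Theorem proposition2p1 (R : realType) (G : groupType) (pi : R -> R)
  (mu : nat -> G -> R) (alpha gamma : R) :
  (forall x, 0 < x <= 1 -> 0 < pi x <= 1) ->
  (forall x y, 0 < x <= 1 -> 0 < y <= 1 -> x <= y -> pi x <= pi y) ->
  pi x @[x --> 0^'+] --> 0 ->
  (forall n, is_prob_mass (mu n)) ->
  detects_index_uniformly mu pi ->
  0 < alpha <= 1 ->
  (alpha%:E <= dcM mu)%E ->
  0 < gamma < 1 ->
  pi gamma < alpha ->
  ((alpha - pi gamma)%:E <=
    limn_esup (fun n => pmeas (mu n)
      [set x : G | index_le (centraliser x) gamma^-1]))%E.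
Proof.
move=> hpi01 hmono _ hprob hdet /andP[a0 a1] hdc /andP[g0 g1] hpg.
set X := [set x : G | index_le (centraliser x) gamma^-1].
set L := limn_esup _.
have g01 : 0 < gamma <= 1 by rewrite g0 ltW.
have pig0 : 0 < pi gamma by case/andP: (hpi01 _ g01).
have key : forall e, 0 < e -> (alpha%:E <= L + (pi gamma + e)%:E)%E.
  move=> e e0; have [N hN] := hdet e e0.
  apply: le_trans hdc _; rewrite /dcM.
  apply: (@limn_esup_leD R _ _ _ N) => n Nn.
  apply: per_n => //; first by rewrite addr_ge0 // ltW.
  move=> x nX.
  have [m [hm hmg]] : exists m, index_ge (centraliser x) m /\ gamma^-1 < m%:R.
    apply: contrapT => hne; apply: nX => m hm; rewrite leNgt; apply/negP => hlt.
    by apply: hne; exists m; split.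
  have ginv0 : 0 < gamma^-1 by rewrite invr_gt0.
  have m0 : (0 < m)%N by rewrite -(ltr0n R); apply: lt_trans hmg.
  have h := hN m _ m0 (@centraliser_sub G x) hm n Nn; apply: (le_trans h).
  rewrite lee_fin lerD2r; apply: hmono => //.
  - by rewrite invr_gt0 ltr0n m0 /= invf_le1 ?ltr0n // ler1n.
  - by rewrite ltW // invf_plt ?posrE ?ltr0n.
apply/lee_addgt0Pr => e e0.
rewrite EFinB leeBlDr // -addeA -EFinD [(_ + _)%E]addeC addrC.
rewrite [e + _]addrC; exact: key.
Qed.
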